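(* Let $d\ge2$ and $\mathbf{x}_i=(x_{1,i},\ldots,x_{n_i,i})^\top\in\mathbb{R}^{n_i}$, $i\in[d]$, with $\mathbf{1}_{n_i}^\top\mathbf{x}_i=\mathbf{1}_{n_{i+1}}^\top\mathbf{x}_{i+1}$ for $i\in[d-1]$. Then $$\frac{n_1\cdots n_d}{\max_in_i}\sum_{i=1}^d\|\mathbf{x}_i\|^2\le\sum_{j_1=1}^{n_1}\cdots\sum_{j_d=1}^{n_d}(x_{j_1,1}+\cdots+x_{j_d,d})^2\le\sum_{i=1}^d\frac{dn_1\cdots n_d}{n_i}\|\mathbf{x}_i\|^2\le\frac{dn_1\cdots n_d}{\min_in_i}\sum_{i=1}^d\|\mathbf{x}_i\|^2.$$
   Context: $\|\cdot\|$ is the Euclidean norm and $\mathbf{1}_n$ the all-ones vector. *)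

(* Defs.v *)
From HB Require Import structures.
From mathcomp Require Import all_boot all_order all_algebra.
Set Implicit Arguments. Unset Strict Implicit. Unset Printing Implicit Defensive.
Import Order.TTheory GRing.Theory Num.Theory.
Local Open Scope ring_scope.

Definition sqnorm (R : ringType) (m : nat) (v : 'cV[R]_m) : R :=
  \sum_(k < m) v k 0 ^+ 2.

Definition onesum (R : ringType) (m : nat) (v : 'cV[R]_m) : R :=
  \sum_(k < m) v k 0.

(* max_i n_i and min_i n_i over i in [d] (min taken with the max as neutral
   element, which is correct whenever d >= 1). *)
Definition nmax (d : nat) (n : 'I_d -> nat) : nat := (\max_(i < d) n i)%N.
Definition nmin (d : nat) (n : 'I_d -> nat) : nat :=
  \big[minn/nmax n]_(i < d) n i.

(* Main.v *)
Require Import Defs.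
From HB Require Import structures.
From mathcomp Require Import all_boot all_order all_algebra.
From mathcomp Require Import ring lra.
Set Implicit Arguments. Unset Strict Implicit. Unset Printing Implicit Defensive.
Import Order.TTheory GRing.Theory Num.Theory.
Local Open Scope ring_scope.

Section Count.
Variables (R : realFieldType) (d : nat) (n : 'I_d -> nat).
Notation fT := {dffun forall i : 'I_d, 'I_(n i)}.

Lemma card_fam (F : forall l, pred 'I_(n l)) :
  #|(family F : simpl_pred fT)| = (\prod_l #|F l|)%N.
Proof. by rewrite card_family foldrE big_map big_enum. Qed.

Definition P1 (i : 'I_d) : nat := (\prod_l (if l == i then 1 else n l))%N.
Definition P2 (i k : 'I_d) : nat :=
  (\prod_l (if (l == i) || (l == k) then 1 else n l))%N.

Lemma card1_proj (i : 'I_d) (a : 'I_(n i)) :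
  #|[pred j : fT | j i == a]| = P1 i.
Proof.
pose F l := [pred y : 'I_(n l) | (l != i) || (val y == val a)].
rewrite -[RHS](_ : #|(family F : simpl_pred fT)| = _).
  apply: eq_card => j; rewrite !inE; apply/eqP/familyP => [ja l | H].
    rewrite /F inE; case: (eqVneq l i) => [e|//]; by rewrite e ja eqxx orbT.
  by apply: ord_inj; have := H i; rewrite /F inE eqxx /= => /eqP.
rewrite card_fam /P1; apply: eq_bigr => l _.
case: (eqVneq l i) => [-> | nli].
  by rewrite -(card1 a); apply: eq_card => y; rewrite /F !inE eqxx /=.
by rewrite -[RHS]card_ord; apply: eq_card => y; rewrite /F !inE nli.
Qed.

Lemma card2_proj (i k : 'I_d) (a : 'I_(n i)) (b : 'I_(n k)) : i != k ->
  #|[pred j : fT | (j i == a) && (j k == b)]| = P2 i k.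
Proof.
move=> nik.
pose F l := [pred y : 'I_(n l) | ((l != i) || (val y == val a)) &&
   ((l != k) || (val y == val b))].
rewrite -[RHS](_ : #|(family F : simpl_pred fT)| = _).
  apply: eq_card => j; rewrite !inE; apply/andP/familyP => [[/eqP ja /eqP jb] l | H].
    rewrite /F inE; case: (eqVneq l i) => [e|ni]; case: (eqVneq l k) => [e'|nk] //=.
    - by exfalso; move/eqP: nik; apply; rewrite -e -e'.
    - by rewrite e ja eqxx.
    - by rewrite e' jb eqxx.
  split; apply/eqP; apply: ord_inj.
    by have := H i; rewrite /F inE eqxx /= => /andP[/eqP].
  by have := H k; rewrite /F inE eqxx /= => /andP[_ /eqP].
rewrite card_fam /P2; apply: eq_bigr => l _.
case: (eqVneq l i) => [-> | nli].
  rewrite -(card1 a); apply: eq_card => y; by rewrite /F !inE eqxx /= nik andbT.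
case: (eqVneq l k) => [e | nlk].
  subst l.
  rewrite -(card1 b); apply: eq_card => y; by rewrite /F !inE eqxx /= eq_sym nik.
by rewrite -[RHS]card_ord; apply: eq_card => y; rewrite /F !inE nli nlk.
Qed.

Lemma sum_proj1 (i : 'I_d) (g : 'I_(n i) -> R) :
  \sum_(j : fT) g (j i) = (P1 i)%:R * \sum_a g a.
Proof.
rewrite (eq_bigr (fun j : fT => \sum_(a | j i == a) g a)); last first.
  by move=> j _; rewrite (big_pred1 (j i)) // => a; rewrite /= eq_sym.
rewrite (eq_bigr (fun j : fT => \sum_a (if j i == a then g a else 0))); last first.
  by move=> j _; rewrite big_mkcond.
rewrite exchange_big mulr_sumr; apply: eq_bigr => a _.
rewrite -big_mkcond /=.
have := sumr_const [pred j : fT | j i == a] (g a); rewrite card1_proj.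
by rewrite mulr_natl => <-; apply: eq_bigl => j; rewrite inE.
Qed.

Lemma sum_proj2 (i k : 'I_d) (g : 'I_(n i) -> R) (h : 'I_(n k) -> R) : i != k ->
  \sum_(j : fT) g (j i) * h (j k) = (P2 i k)%:R * ((\sum_a g a) * (\sum_b h b)).
Proof.
move=> nik.
rewrite (eq_bigr (fun j : fT => \sum_a \sum_b
   (if (j i == a) && (j k == b) then g a * h b else 0))); last first.
  move=> j _; rewrite (bigD1 (j i)) //= [X in _ + X]big1 ?addr0; last first.
    move=> a nai; apply: big1 => b _.
    by rewrite eq_sym (negbTE nai).
  rewrite (bigD1 (j k)) //= [X in _ + X]big1 ?addr0 ?eqxx //.
  by move=> b nb; rewrite eq_sym (negbTE nb) andbF.
rewrite [LHS]exchange_big [X in _ = _ * X]mulr_suml [RHS]mulr_sumr /=; apply: eq_bigr => a _.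
rewrite [LHS]exchange_big [X in _ = _ * X]mulr_sumr [RHS]mulr_sumr /=; apply: eq_bigr => b _.
rewrite -big_mkcond /=.
have := sumr_const [pred j : fT | (j i == a) && (j k == b)] (g a * h b).
rewrite card2_proj //.
by rewrite mulr_natl => <-; apply: eq_bigl => j; rewrite inE.
Qed.


Lemma sumc m (c : R) : \sum_(i < m) c = c *+ m.
Proof. elim: m => [|m IH]; by rewrite ?big_ord0 // big_ord_recr IH mulrSr. Qed.

Lemma twoab (a b : R) : 2%:R * (a * b) <= a ^+ 2 + b ^+ 2.
Proof. by have := sqr_ge0 (a - b); nra. Qed.

Lemma cs_sum (a : 'I_d -> R) : (\sum_i a i) ^+ 2 <= d%:R * \sum_i a i ^+ 2.
Proof.
have h2 : (0 : R) < 2%:R by rewrite ltr0n.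
rewrite -(ler_pM2l h2).
have -> : 2%:R * (\sum_i a i) ^+ 2 = \sum_i \sum_k 2%:R * (a i * a k).
  by rewrite expr2 mulr_suml mulr_sumr; apply: eq_bigr => i _; rewrite mulr_sumr mulr_sumr.
apply: (le_trans (y := \sum_i \sum_k (a i ^+ 2 + a k ^+ 2))).
  apply: ler_sum => i _; apply: ler_sum => k _.
  exact: twoab.
rewrite le_eqVlt; apply/orP; left; apply/eqP.
under eq_bigr => i _ do rewrite big_split /= sumc.
rewrite big_split /= sumrMnl.
rewrite (sumc d (\sum_(i<d) a i ^+ 2)).
rewrite -mulrnDl -mulr_natl; ring.
Qed.
End Count.

Lemma bigmin_le (I : eqType) (s : seq I) x0 (F : I -> nat) i :
  i \in s -> (\big[minn/x0]_(l <- s) F l <= F i)%N.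
Proof.
elim: s => // a s IH; rewrite inE big_cons => /orP[/eqP->|/IH h].
  exact: geq_minl.
exact: leq_trans (geq_minr _ _) h.
Qed.

Unset Implicit Arguments.
Set Strict Implicit.

Theorem lemma2p3 (R : realFieldType) (d : nat) (n : 'I_d -> nat)
  (x : forall i : 'I_d, 'cV[R]_(n i)) :
  (2 <= d)%N ->
  (forall i : 'I_d, (0 < n i)%N) ->
  (forall (i : nat) (hi : (i.+1 < d)%N),
      onesum (x (Ordinal (ltnW hi))) = onesum (x (Ordinal hi))) ->
  let N := (\prod_(i < d) n i)%N in
  let S := \sum_(i < d) sqnorm (x i) in
  let B := \sum_(j : {dffun forall i : 'I_d, 'I_(n i)})
             (\sum_(i < d) x i (j i) 0) ^+ 2 in
  [/\ N%:R / (nmax n)%:R * S <= B,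
      B <= \sum_(i < d) (d * N)%:R / (n i)%:R * sqnorm (x i)
    & \sum_(i < d) (d * N)%:R / (n i)%:R * sqnorm (x i)
        <= (d * N)%:R / (nmin n)%:R * S].
Proof.
move=> hd hn hs N S B.
have h0 : (0 < d)%N by apply: leq_trans hd.
have hN i : N = (n i * P1 n i)%N.
  rewrite /N /P1 (bigD1 i) //= [in RHS](bigD1 i) //= eqxx mul1n; congr (_ * _)%N.
  by apply: eq_bigr => l /negbTE ->.
have hsq i : 0 <= sqnorm (x i) by apply: sumr_ge0 => k _; exact: sqr_ge0.
have hsum i : onesum (x i) = onesum (x (Ordinal h0)).
  case: i => m hm.
  elim: m hm => [|m IH] hm; first by congr (onesum (x _)); apply: ord_inj.
  rewrite -(hs m hm) -(IH (ltnW hm)); congr (onesum (x _)); exact: ord_inj.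
have Bexp : B = \sum_i \sum_k \sum_(j : {dffun forall i : 'I_d, 'I_(n i)})
                   x i (j i) 0 * x k (j k) 0.
  rewrite /B (eq_bigr (fun j : {dffun forall i : 'I_d, 'I_(n i)} =>
     \sum_i \sum_k x i (j i) 0 * x k (j k) 0)); last first.
    by move=> j _; rewrite expr2 mulr_suml; apply: eq_bigr => i _; rewrite mulr_sumr.
  rewrite [LHS]exchange_big /=; apply: eq_bigr => i _.
  by rewrite [LHS]exchange_big.
have Bdiag : \sum_i (P1 n i)%:R * sqnorm (x i) <= B.
  rewrite Bexp; apply: ler_sum => i _.
  rewrite (bigD1 i) //=.
  rewrite (sum_proj1 (fun t => x i t 0 * x i t 0)).
  have -> : \sum_a x i a 0 * x i a 0 = sqnorm (x i).
    by apply: eq_bigr => a _; rewrite expr2.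
  rewrite lerDl; apply: sumr_ge0 => k nki.
  rewrite (sum_proj2 (fun t => x i t 0) (fun t => x k t 0)); last by rewrite eq_sym.
  have -> : \sum_a x i a 0 = onesum (x i) by [].
  have -> : \sum_b x k b 0 = onesum (x k) by [].
  rewrite hsum (hsum k) -expr2; apply: mulr_ge0 => //; exact: sqr_ge0.
have E i : (d * N)%:R / (n i)%:R = d%:R * (P1 n i)%:R :> R.
  have ni0 : (n i)%:R != 0 :> R by rewrite pnatr_eq0 -lt0n hn.
  rewrite (hN i) !natrM [(n i)%:R * _]mulrC mulrA mulfK //.
have Mid : \sum_i (d * N)%:R / (n i)%:R * sqnorm (x i)
           = d%:R * \sum_i (P1 n i)%:R * sqnorm (x i).
  rewrite mulr_sumr; apply: eq_bigr => i _; by rewrite E mulrA.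
split.
- apply: le_trans Bdiag; rewrite /S mulr_sumr; apply: ler_sum => i _.
  apply: ler_wpM2r => //.
  have hm : (0 : R) < (nmax n)%:R.
    by rewrite ltr0n /nmax; exact: (leq_trans (hn (Ordinal h0)) (@leq_bigmax _ n (Ordinal h0))).
  rewrite (hN i) natrM ler_pdivrMr // mulrC ler_wpM2l // ler_nat.
  exact: leq_bigmax.
- rewrite Mid /B.
  apply: (le_trans (y := \sum_(j : {dffun forall i : 'I_d, 'I_(n i)})
     d%:R * \sum_i x i (j i) 0 ^+ 2)).
    by apply: ler_sum => j _; exact: cs_sum.
  rewrite -mulr_sumr le_eqVlt; apply/orP; left; apply/eqP; congr (_ * _).
  rewrite [LHS]exchange_big /=; apply: eq_bigr => i _.
  rewrite (sum_proj1 (fun t => x i t 0 ^+ 2)) //.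
- rewrite /S mulr_sumr; apply: ler_sum => i _.
  apply: ler_wpM2r => //.
  have hmin : (0 < nmin n)%N.
    rewrite /nmin; apply: (big_ind (fun m => 0 < m)%N).
    + by rewrite /nmax; exact: (leq_trans (hn (Ordinal h0)) (@leq_bigmax _ n (Ordinal h0))).
    + by move=> p q hp hq; rewrite leq_min hp hq.
    + by move=> l _; exact: hn.
  have hle : (nmin n <= n i)%N.
    rewrite /nmin; apply: bigmin_le; exact: mem_index_enum.
  apply: ler_wpM2l => //.
  by rewrite lef_pV2 ?ler_nat // ?posrE ?ltr0n.
Qed.
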